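(* Let $\mathcal D$ be universal, $\mathrm M=(M,d)\in\mathfrak U_{\mathcal D}$, $A,B\subseteq M$ finite with $A\cap B=\emptyset$, $s\in\mathbb N$, and for each $i<s$ let $\mathfrak t_i\subseteq\mathfrak s_i$ be Katětov functions of $\mathrm M$ with $\operatorname{dom}(\mathfrak t_i)=A$ and $\operatorname{dom}(\mathfrak s_i)=A\cup B$, such that $d(\mathfrak t_i,\mathfrak t_j)=d(\mathfrak s_i,\mathfrak s_j)$ for all $i,j<s$. Then there exists an isometric embedding $\alpha$ of $\mathrm M$ into $\mathrm M$ with $\alpha(x)=x$ for all $x\in A$ and $\alpha(x)\in\operatorname{orb}(\mathfrak s_i)$ for all $x\in\operatorname{orb}(\mathfrak t_i)$ and all $i<s$; equivalently $\operatorname{orb}_{\alpha(M)}(\mathfrak t_i)\subseteq\operatorname{orb}_{M}(\mathfrak s_i)$ for all $i<s$.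
   Context: $\mathcal D$ is a finite subset of $\mathbb R_{\ge0}$ containing $0$. $\mathfrak U_{\mathcal D}$ is the class of countable homogeneous metric spaces (every isometry between finite subspaces extends to an isometry of the space onto itself) with distance set exactly $\mathcal D$ into which every finite metric space with distances in $\mathcal D$ embeds isometrically; $\mathcal D$ is universal if this class is nonempty. A Katětov function of $\mathrm M$ is a map $\mathfrak t:F\to\mathcal D\setminus\{0\}$, $F\subseteq M$ finite, with $|\mathfrak t(x)-\mathfrak t(y)|\le d(x,y)\le\mathfrak t(x)+\mathfrak t(y)$ for all $x,y\in F$; $\operatorname{orb}_M(\mathfrak t)=\{y\in M\setminus F: d(y,x)=\mathfrak t(x)\ \forall x\in F\}$ and for $H\subseteq M$ containing $F$, $\operatorname{orb}_H(\mathfrak t)=\operatorname{orb}_M(\mathfrak t)\cap H$. $d(\mathfrak s,\mathfrak t)=\{d(x,y):x\in\operatorname{orb}_M(\mathfrak s),y\in\operatorname{orb}_M(\mathfrak t)\}$. *)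

(* Defs.v *)
From Stdlib Require Export Reals List.
Export ListNotations.
Open Scope R_scope.

Definition is_metric (X : Type) (d : X -> X -> R) : Prop :=
  (forall x y, 0 <= d x y) /\
  (forall x y, d x y = 0 <-> x = y) /\
  (forall x y, d x y = d y x) /\
  (forall x y z, d x z <= d x y + d y z).

Definition countable_type (X : Type) : Prop :=
  exists f : X -> nat, forall x y, f x = f y -> x = y.

(* Homogeneous: every isometry between finite subspaces (the finite subspace F,
   with the map f restricted to F) extends to an isometry of X onto itself. *)
Definition homogeneous (X : Type) (d : X -> X -> R) : Prop :=
  forall (F : list X) (f : X -> X),
    (forall x y, In x F -> In y F -> d (f x) (f y) = d x y) ->
    exists g : X -> X,
      (forall x y, d (g x) (g y) = d x y) /\
      (forall y, exists x, g x = y) /\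
      (forall x, In x F -> g x = f x).

Definition distance_set_is (D : list R) (X : Type) (d : X -> X -> R) : Prop :=
  (forall x y, In (d x y) D) /\ (forall r, In r D -> exists x y, d x y = r).

Definition finite_D_metric (D : list R) (n : nat) (e : nat -> nat -> R) : Prop :=
  (forall i j, (i < n)%nat -> (j < n)%nat -> In (e i j) D) /\
  (forall i j, (i < n)%nat -> (j < n)%nat -> 0 <= e i j) /\
  (forall i j, (i < n)%nat -> (j < n)%nat -> (e i j = 0 <-> i = j)) /\
  (forall i j, (i < n)%nat -> (j < n)%nat -> e i j = e j i) /\
  (forall i j k, (i < n)%nat -> (j < n)%nat -> (k < n)%nat ->
     e i k <= e i j + e j k).

Definition D_universal_space (D : list R) (X : Type) (d : X -> X -> R) : Prop :=
  forall (n : nat) (e : nat -> nat -> R), finite_D_metric D n e ->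
    exists h : nat -> X,
      forall i j, (i < n)%nat -> (j < n)%nat -> d (h i) (h j) = e i j.

Definition in_U (D : list R) (X : Type) (d : X -> X -> R) : Prop :=
  is_metric X d /\ countable_type X /\ homogeneous X d /\
  distance_set_is D X d /\ D_universal_space D X d.

Definition universal_D (D : list R) : Prop :=
  exists (X : Type) (d : X -> X -> R), in_U D X d.

(* Katetov function t with domain F (values of t outside F are irrelevant). *)
Definition katetov (D : list R) (X : Type) (d : X -> X -> R)
    (F : list X) (t : X -> R) : Prop :=
  (forall x, In x F -> In (t x) D /\ t x <> 0) /\
  (forall x y, In x F -> In y F ->
     Rabs (t x - t y) <= d x y /\ d x y <= t x + t y).

Definition orb (X : Type) (d : X -> X -> R) (F : list X) (t : X -> R) (y : X)
  : Prop :=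
  ~ In y F /\ forall x, In x F -> d y x = t x.

Definition orb_dist (X : Type) (d : X -> X -> R) (Fs : list X) (s : X -> R)
    (Ft : list X) (t : X -> R) (r : R) : Prop :=
  exists x y, orb X d Fs s x /\ orb X d Ft t y /\ d x y = r.

(* Main.v *)
Require Import Defs.
From Stdlib Require Import Reals Lra Lia List Classical ClassicalEpsilon.
Import ListNotations.
Open Scope R_scope.

Ltac rabs_elim := unfold Rabs in *; repeat match goal with
  | |- context [Rcase_abs ?x] => destruct (Rcase_abs x)
  | H : context [Rcase_abs ?x] |- _ => destruct (Rcase_abs x) end.

Section Main.
Variable D : list R.
Hypothesis HD0 : In 0 D.
Hypothesis HDnn : forall r, In r D -> 0 <= r.
Variable X : Type.
Variable d : X -> X -> R.
Hypothesis HM : in_U D X d.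

Lemma d_nonneg x y : 0 <= d x y.
Proof. destruct HM as [[H _] _]. apply H. Qed.
Lemma d_zero x y : d x y = 0 <-> x = y.
Proof. destruct HM as [[_ [H _]] _]. apply H. Qed.
Lemma d_sym x y : d x y = d y x.
Proof. destruct HM as [[_ [_ [H _]]] _]. apply H. Qed.
Lemma d_tri x y z : d x z <= d x y + d y z.
Proof. destruct HM as [[_ [_ [_ H]]] _]. apply H. Qed.
Lemma d_refl x : d x x = 0.
Proof. apply d_zero; auto. Qed.
Lemma d_inD x y : In (d x y) D.
Proof. destruct HM as [_ [_ [_ [[H _] _]]]]. apply H. Qed.

Lemma tri3 u v w : Rabs (d u w - d v w) <= d u v /\ d u v <= d u w + d v w.
Proof.
  pose proof (d_tri u w v). pose proof (d_tri u v w). pose proof (d_tri v u w).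
  pose proof (d_sym u v). pose proof (d_sym v w). split; [rabs_elim|]; lra.
Qed.

Lemma inhabX : exists x0 : X, True.
Proof.
  destruct HM as [_ [_ [_ [_ H]]]].
  destruct (H 1%nat (fun _ _ => 0)) as [h _].
  - repeat split; intros; try lra; auto. lia.
  - exists (h 0%nat); auto.
Qed.

Definition KT (P : list (X*R)) :=
  (forall p, In p P -> In (snd p) D) /\
  (forall p q, In p P -> In q P ->
     Rabs (snd p - snd q) <= d (fst p) (fst q) /\ d (fst p) (fst q) <= snd p + snd q).

Lemma realize (P : list (X*R)) : KT P -> NoDup (map fst P) ->
  (forall p, In p P -> snd p <> 0) ->
  exists y, forall p, In p P -> d y (fst p) = snd p.
Proof.
  intros [HPD HPK] Hnd Hnz.
  destruct inhabX as [x0 _].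
  destruct HM as [_ [_ [Hhom [_ Huniv]]]].
  set (n := length P).
  set (pts := fun i => fst (nth i P (x0,0))).
  set (vals := fun i => snd (nth i P (x0,0))).
  set (e := fun i j => if Nat.eqb i n then (if Nat.eqb j n then 0 else vals j)
                       else if Nat.eqb j n then vals i else d (pts i) (pts j)).
  assert (Hin : forall i, (i < n)%nat -> In (nth i P (x0,0)) P) by (intros; apply nth_In; auto).
  assert (Hinj : forall i j, (i < n)%nat -> (j < n)%nat -> pts i = pts j -> i = j).
  { intros i j Hi Hj E. rewrite (NoDup_nth (map fst P) x0) in Hnd.
    apply Hnd; try (rewrite length_map; auto).
    rewrite !(map_nth fst P (x0,0)). exact E. }
  assert (HK : forall i j, (i < n)%nat -> (j < n)%nat ->
     Rabs (vals i - vals j) <= d (pts i) (pts j) /\ d (pts i) (pts j) <= vals i + vals j)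
    by (intros; apply HPK; auto).
  assert (HvD : forall i, (i < n)%nat -> In (vals i) D) by (intros; apply HPD; auto).
  assert (Hv0 : forall i, (i < n)%nat -> 0 < vals i).
  { intros i Hi. pose proof (HDnn _ (HvD i Hi)). pose proof (Hnz _ (Hin i Hi)).
    unfold vals in *. destruct (Rle_lt_or_eq_dec _ _ H) as [|E]; auto.
    exfalso; apply H0; auto. }
  assert (Hfm : finite_D_metric D (S n) e).
  { unfold e. repeat split.
    - intros i j Hi Hj. destruct (Nat.eqb_spec i n); destruct (Nat.eqb_spec j n);
        auto; try apply HvD; try lia. apply d_inD.
    - intros i j Hi Hj. destruct (Nat.eqb_spec i n); destruct (Nat.eqb_spec j n);
        try lra; try (apply Rlt_le; apply Hv0; lia). apply d_nonneg.
    - intros Hij. destruct (Nat.eqb_spec i n); destruct (Nat.eqb_spec j n); try lia.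
      + pose proof (Hv0 j ltac:(lia)); lra.
      + pose proof (Hv0 i ltac:(lia)); lra.
      + apply Hinj; try lia. apply d_zero; auto.
    - intros Hij; subst j. destruct (Nat.eqb_spec i n); auto. apply d_refl.
    - intros i j Hi Hj. destruct (Nat.eqb_spec i n); destruct (Nat.eqb_spec j n); auto.
      apply d_sym.
    - intros i j k Hi Hj Hk.
      destruct (Nat.eqb_spec i n); destruct (Nat.eqb_spec j n); destruct (Nat.eqb_spec k n);
        [lra| | | | | | | apply d_tri];
      repeat match goal with H : ?a <> n |- _ =>
          assert (a < n)%nat by lia; clear H end;
      subst;
      repeat match goal with H : (?a < n)%nat |- _ =>
          pose proof (Hv0 a H); revert H end; intros;
      repeat match goal with H : (?a < n)%nat, H' : (?b < n)%nat |- _ =>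
          pose proof (HK a b H H'); revert H end; intros;
      first [rabs_elim; lra | rewrite d_sym; rabs_elim; lra]. }
  destruct (Huniv _ _ Hfm) as [h Hh].
  set (idx := fun x => epsilon (inhabits 0%nat) (fun i => (i < n)%nat /\ h i = x)).
  set (f := fun x => pts (idx x)).
  assert (Hf : forall i, (i < n)%nat -> f (h i) = pts i).
  { intros i Hi. unfold f.
    destruct (epsilon_spec (inhabits 0%nat) (fun k => (k < n)%nat /\ h k = h i))
      as [Hk Hki]; [exists i; auto|].
    fold (idx (h i)) in Hk, Hki.
    assert (idx (h i) = i) as ->; auto.
    assert (E : e (idx (h i)) i = 0).
    { rewrite <- Hh by lia. rewrite Hki. apply d_refl. }
    unfold e in E. destruct (Nat.eqb_spec (idx (h i)) n); try lia.
    destruct (Nat.eqb_spec i n); try lia. apply Hinj; auto. apply d_zero; auto. }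
  destruct (Hhom (map h (seq 0 n)) f) as [g [Hg1 [_ Hg3]]].
  { intros x y Hx Hy. apply in_map_iff in Hx as [i [<- Hi]]. apply in_map_iff in Hy as [j [<- Hj]].
    apply in_seq in Hi. apply in_seq in Hj.
    rewrite !Hf by lia. rewrite Hh by lia. unfold e.
    destruct (Nat.eqb_spec i n); destruct (Nat.eqb_spec j n); try lia; auto. }
  exists (g (h n)). intros p Hp.
  destruct (In_nth P p (x0,0) Hp) as [i [Hi <-]].
  change (fst (nth i P (x0, 0))) with (pts i).
  rewrite <- (Hf i Hi). rewrite <- Hg3.
  2:{ apply in_map. apply in_seq. lia. }
  rewrite Hg1. rewrite Hh by lia. unfold e. rewrite Nat.eqb_refl.
  destruct (Nat.eqb_spec i n); try lia. reflexivity.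
Qed.

Lemma dedup (P : list (X*R)) : exists P', incl P' P /\ NoDup (map fst P') /\
   forall p, In p P -> exists q, In q P' /\ fst q = fst p.
Proof.
  induction P as [|p P IH].
  - exists []. repeat split; auto. intros a []. constructor. intros q [].
  - destruct IH as [P' [H1 [H2 H3]]].
    destruct (classic (exists q, In q P' /\ fst q = fst p)) as [Hex|Hn].
    + exists P'. repeat split; auto.
      * intros a Ha. right; auto.
      * intros q [<-|Hq]; auto.
    + exists (p :: P'). repeat split.
      * intros a [<-|Ha]; [left; auto|right; auto].
      * simpl. constructor; auto. intros Hin. apply in_map_iff in Hin as [q [Eq Hq]].
        apply Hn. exists q; auto.
      * intros q [<-|Hq]. exists p; split; auto. left; auto.
        destruct (H3 q Hq) as [r [Hr Er]]. exists r; split; auto. right; auto.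
Qed.

Lemma EP0 (P : list (X*R)) : KT P -> exists y, forall p, In p P -> d y (fst p) = snd p.
Proof.
  intros [HPD HPK].
  destruct (classic (exists p, In p P /\ snd p = 0)) as [[p [Hp E]]|Hnz].
  - exists (fst p). intros q Hq. destruct (HPK p q Hp Hq) as [H1 H2].
    pose proof (HDnn _ (HPD q Hq)). rewrite E in *. rabs_elim; lra.
  - destruct (dedup P) as [P' [Hinc [Hnd Hcov]]].
    destruct (realize P') as [y Hy]; auto.
    + split; intros; apply HPD || apply HPK; auto.
    + intros p Hp E. apply Hnz. exists p; auto.
    + exists y. intros p Hp. destruct (Hcov p Hp) as [q [Hq Eq]].
      rewrite <- Eq, Hy by auto.
      destruct (HPK p q Hp (Hinc _ Hq)) as [H1 H2]. rewrite Eq, d_refl in H1.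
      rabs_elim; lra.
Qed.

Lemma KT_point (y : X) (Q : list (X*R)) :
  (forall p, In p Q -> snd p = d y (fst p)) -> KT Q.
Proof.
  intros HQ. split.
  - intros p Hp. rewrite HQ by auto. apply d_inD.
  - intros p q Hp Hq. rewrite !HQ by auto.
    destruct (tri3 (fst p) (fst q) y) as [H1 H2].
    rewrite (d_sym y (fst p)), (d_sym y (fst q)). auto.
Qed.

Variables (A B : list X) (s : nat) (t ss : nat -> X -> R).
Hypothesis HAB : forall x, In x A -> ~ In x B.
Hypothesis Ht : forall i, (i < s)%nat -> katetov D X d A (t i).
Hypothesis Hs : forall i, (i < s)%nat -> katetov D X d (A ++ B) (ss i).
Hypothesis Hts : forall i, (i < s)%nat -> forall x, In x A -> ss i x = t i x.
Hypothesis Hdist : forall i j, (i < s)%nat -> (j < s)%nat -> forall r,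
      orb_dist X d A (t i) A (t j) r <-> orb_dist X d (A ++ B) (ss i) (A ++ B) (ss j) r.

Lemma hdist_tri i j x c b : (i < s)%nat -> (j < s)%nat ->
  orb X d A (t i) x -> orb X d A (t j) c -> In b B ->
  Rabs (ss i b - ss j b) <= d x c /\ d x c <= ss i b + ss j b.
Proof.
  intros Hi Hj Hx Hc Hb.
  destruct (proj1 (Hdist i j Hi Hj (d x c))) as [u [v [Hu [Hv E]]]].
  - exists x, c. auto.
  - destruct Hu as [_ Hu]. destruct Hv as [_ Hv].
    rewrite <- (Hu b), <- (Hv b), <- E by (apply in_or_app; auto). apply tri3.
Qed.

Lemma same_ss i j x b : (i < s)%nat -> (j < s)%nat ->
  orb X d A (t i) x -> orb X d A (t j) x -> In b B -> ss i b = ss j b.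
Proof.
  intros. destruct (hdist_tri i j x x b) as [K1 _]; auto.
  rewrite d_refl in K1. rabs_elim; lra.
Qed.

Definition INV (L : list X) (al : X -> X) : Prop :=
 (forall a, In a A -> In a L) /\ (forall a, In a A -> al a = a) /\
 (forall x y, In x L -> In y L -> d (al x) (al y) = d x y) /\
 (forall x i, In x L -> (i < s)%nat -> orb X d A (t i) x ->
     forall b, In b B -> d (al x) b = ss i b) /\
 (forall x, In x L -> forall j c b, (j < s)%nat -> orb X d A (t j) c -> In b B ->
     Rabs (d (al x) b - ss j b) <= d x c /\ d x c <= d (al x) b + ss j b).

Definition upd (f : X -> X) (m y : X) : X -> X :=
  fun z => if excluded_middle_informative (z = m) then y else f z.
Lemma upd_m f m y : upd f m y m = y.
Proof. unfold upd. destruct (excluded_middle_informative (m = m)); congruence. Qed.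
Lemma upd_o f m y z : z <> m -> upd f m y z = f z.
Proof. unfold upd. destruct (excluded_middle_informative (z = m)); congruence. Qed.

Lemma INV_cons_in L al m : In m L -> INV L al -> INV (m :: L) al.
Proof.
  intros Hm [J1 [J2 [J3 [J4 J5]]]]. split; [|split; [|split; [|split]]]; auto.
  - intros a Ha; right; auto.
  - intros x y [<-|Hx] [<-|Hy]; auto.
  - intros x i [<-|Hx]; eauto.
  - intros x [<-|Hx]; eauto.
Qed.

Lemma KT_iso (f : X -> X) (L : list X) (m : X) :
  (forall x z, In x L -> In z L -> d (f x) (f z) = d x z) ->
  KT (map (fun x => (f x, d m x)) L).
Proof.
  intros Hf. split.
  - intros p Hp. apply in_map_iff in Hp as [x [<- _]]. apply d_inD.
  - intros p q Hp Hq. apply in_map_iff in Hp as [x [<- Hx]].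
    apply in_map_iff in Hq as [z [<- Hz]]. simpl. rewrite Hf by auto.
    destruct (tri3 x z m) as [H1 H2]. rewrite (d_sym m x), (d_sym m z). auto.
Qed.

Lemma orbit_step L al m i : INV L al -> (i < s)%nat -> orb X d A (t i) m ->
  exists al', INV (m :: L) al' /\ forall z, In z L -> al' z = al z.
Proof.
  intros HI Hi Hm.
  destruct (classic (In m L)) as [HmL|HmL].
  { exists al. split; auto. apply INV_cons_in; auto. }
  destruct HI as [I1 [I2 [I3 [I4 I5]]]].
  set (P := map (fun x => (al x, d m x)) L ++ map (fun b => (b, ss i b)) B).
  destruct (EP0 P) as [y Hy].
  { destruct (KT_iso al L m I3) as [K1 K2].
    destruct (Hs i Hi) as [S1 S2].
    split.
    - intros p Hp. apply in_app_or in Hp as [Hp|Hp]; auto.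
      apply in_map_iff in Hp as [b [<- Hb]]. apply S1. apply in_or_app; auto.
    - intros p q Hp Hq. apply in_app_or in Hp as [Hp|Hp]; apply in_app_or in Hq as [Hq|Hq]; auto.
      + apply in_map_iff in Hp as [x [<- Hx]]. apply in_map_iff in Hq as [b [<- Hb]]. simpl.
        destruct (I5 x Hx i m b Hi Hm Hb) as [J1 J2]. rewrite (d_sym m x). rabs_elim; lra.
      + apply in_map_iff in Hq as [x [<- Hx]]. apply in_map_iff in Hp as [b [<- Hb]]. simpl.
        destruct (I5 x Hx i m b Hi Hm Hb) as [J1 J2]. rewrite (d_sym m x), (d_sym b).
        rabs_elim; lra.
      + apply in_map_iff in Hq as [b' [<- Hb']]. apply in_map_iff in Hp as [b [<- Hb]]. simpl.
        apply S2; apply in_or_app; auto. }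
  assert (Y1 : forall x, In x L -> d y (al x) = d m x).
  { intros x Hx. apply (Hy (al x, d m x)). apply in_or_app; left.
    apply in_map_iff. exists x; auto. }
  assert (Y2 : forall b, In b B -> d y b = ss i b).
  { intros b Hb. apply (Hy (b, ss i b)). apply in_or_app; right.
    apply in_map_iff. exists b; auto. }
  assert (Hne : forall x, In x L -> x <> m) by (intros x Hx E; subst; auto).
  exists (upd al m y). split.
  2:{ intros z Hz. apply upd_o; auto. }
  split; [|split; [|split; [|split]]].
  - intros a Ha. right; auto.
  - intros a Ha. rewrite upd_o; auto.
  - intros x z [<-|Hx] [<-|Hz].
    + rewrite !upd_m, !d_refl; auto.
    + rewrite upd_m, upd_o by auto. auto.
    + rewrite upd_m, upd_o by auto. rewrite d_sym, Y1 by auto. apply d_sym.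
    + rewrite !upd_o by auto. auto.
  - intros x j [<-|Hx] Hj Hxj b Hb.
    + rewrite upd_m, Y2 by auto. apply (same_ss i j m b); auto.
    + rewrite upd_o by auto. eauto.
  - intros x [<-|Hx] j c b Hj Hc Hb.
    + rewrite upd_m, Y2 by auto. apply hdist_tri; auto.
    + rewrite upd_o by auto. destruct (I5 x Hx j c b Hj Hc Hb); auto.
Qed.

Fixpoint lists_over (n : nat) : list (list R) :=
  match n with
  | O => [[]]
  | S k => flat_map (fun r => map (cons r) (lists_over k)) D
  end.

Lemma lists_over_in vs : (forall v, In v vs -> In v D) -> In vs (lists_over (length vs)).
Proof.
  induction vs as [|v vs IH]; intros H; simpl; auto.
  apply in_flat_map. exists v. split; [apply H; left; auto|]. apply in_map. apply IH. intros; apply H; right; auto.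
Qed.

Lemma combine_map (l : list X) (f : X -> R) : combine l (map f l) = map (fun x => (x, f x)) l.
Proof. induction l; simpl; congruence. Qed.

Lemma combine_has (l : list X) (vs : list R) b : In b l -> length vs = length l ->
  exists v, In (b, v) (combine l vs).
Proof.
  revert vs. induction l as [|a l IH]; intros vs Hb Hl; [destruct Hb|].
  destruct vs as [|v vs]; [discriminate|]. destruct Hb as [<-|Hb].
  - exists v. left; auto.
  - destruct (IH vs Hb) as [w Hw]; auto. exists w. right; auto.
Qed.

Lemma extend_orbits (W : list (nat * X)) L al :
  (forall w, In w W -> (fst w < s)%nat /\ orb X d A (t (fst w)) (snd w)) ->
  INV L al -> exists al', INV (map snd W ++ L) al' /\ forall z, In z L -> al' z = al z.
Proof.
  induction W as [|w W IH]; intros HW HI.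
  - exists al; simpl; auto.
  - destruct IH as [al1 [HI1 Hag1]]; auto. intros; apply HW; right; auto.
    destruct (HW w (or_introl eq_refl)) as [Hw1 Hw2].
    destruct (orbit_step _ _ _ _ HI1 Hw1 Hw2) as [al2 [HI2 Hag2]].
    exists al2. split; auto. intros z Hz. rewrite Hag2, Hag1; auto.
    apply in_or_app; auto.
Qed.

Definition viol (y : X) (j : nat) (c : X) (m : X) : Prop :=
  exists b, In b B /\ ~ (Rabs (d y b - ss j b) <= d m c /\ d m c <= d y b + ss j b).

Definition Tl (L : list X) (al : X -> X) (m : X) (vs : list R) :=
  map (fun x => (al x, d m x)) L ++ combine B vs.

Lemma witnesses L al m Vs :
  ~ (exists y, (forall x, In x L -> d y (al x) = d m x) /\
      (forall j c b, (j < s)%nat -> orb X d A (t j) c -> In b B ->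
         Rabs (d y b - ss j b) <= d m c /\ d m c <= d y b + ss j b)) ->
  exists W : list (nat * X),
    (forall w, In w W -> (fst w < s)%nat /\ orb X d A (t (fst w)) (snd w)) /\
    forall vs, In vs Vs -> KT (Tl L al m vs) -> length vs = length B ->
      exists w, In w W /\ forall y, (forall p, In p (Tl L al m vs) -> d y (fst p) = snd p) ->
        viol y (fst w) (snd w) m.
Proof.
  intros Hno. induction Vs as [|vs Vs IH].
  - exists []. split; intros ? [].
  - destruct IH as [W [HW1 HW2]].
    destruct (classic (KT (Tl L al m vs) /\ length vs = length B)) as [[HK Hl]|HK].
    + destruct (EP0 _ HK) as [y0 Hy0].
      assert (Hv : exists j c b, (j < s)%nat /\ orb X d A (t j) c /\ In b B /\
          ~ (Rabs (d y0 b - ss j b) <= d m c /\ d m c <= d y0 b + ss j b)).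
      { apply NNPP. intros Hn. apply Hno. exists y0. split.
        - intros x Hx. apply (Hy0 (al x, d m x)). apply in_or_app; left.
          apply in_map_iff; exists x; auto.
        - intros j c b Hj Hc Hb. apply NNPP. intros Hn'. apply Hn. exists j, c, b; auto. }
      destruct Hv as [j [c [b [Hj [Hc [Hb Hn]]]]]].
      exists ((j, c) :: W). split.
      * intros w [<-|Hw]; auto.
      * intros vs' [<-|Hvs] HK' Hl'.
        -- exists (j, c). split; [left; auto|]. intros y Hy. exists b. split; auto.
           destruct (combine_has B vs b Hb Hl) as [v Hbv].
           assert (E : d y b = d y0 b).
           { assert (Hbv' : In (b, v) (Tl L al m vs)) by (apply in_or_app; auto).
             pose proof (Hy _ Hbv'). pose proof (Hy0 _ Hbv'). simpl in *; congruence. }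
           simpl. rewrite E. auto.
        -- destruct (HW2 vs' Hvs HK' Hl') as [w [Hw Hw']]. exists w. split; auto. right; auto.
    + exists W. split; auto. intros vs' [<-|Hvs] HK' Hl'.
      * exfalso; auto.
      * destruct (HW2 vs' Hvs HK' Hl') as [w [Hw Hw']]. exists w. split; auto.
Qed.

Lemma general_step L al m : INV L al ->
  exists al', INV (m :: L) al' /\ forall z, In z L -> al' z = al z.
Proof.
  intros HI.
  destruct (classic (In m L)) as [HmL|HmL].
  { exists al. split; auto. apply INV_cons_in; auto. }
  destruct (classic (exists i, (i < s)%nat /\ orb X d A (t i) m)) as [[i [Hi Hm]]|Hno].
  { eapply orbit_step; eauto. }
  assert (Hex : exists y, (forall x, In x L -> d y (al x) = d m x) /\
      (forall j c b, (j < s)%nat -> orb X d A (t j) c -> In b B ->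
         Rabs (d y b - ss j b) <= d m c /\ d m c <= d y b + ss j b)).
  { apply NNPP. intros Hn.
    destruct (witnesses L al m (lists_over (length B)) Hn) as [W [HW1 HW2]].
    destruct (extend_orbits W L al HW1 HI) as [al' [HI' Hag]].
    destruct HI' as [I1 [I2 [I3 [I4 I5]]]].
    destruct (EP0 (map (fun x => (al' x, d m x)) (map snd W ++ L))) as [y' Hy'].
    { apply KT_iso. auto. }
    assert (Y1 : forall z, In z (map snd W ++ L) -> d y' (al' z) = d m z).
    { intros z Hz. apply (Hy' (al' z, d m z)). apply in_map_iff; exists z; auto. }
    set (vs := map (fun b => d y' b) B).
    assert (Hl : length vs = length B) by (unfold vs; apply length_map).
    assert (HT : forall p, In p (Tl L al m vs) -> d y' (fst p) = snd p).
    { intros p Hp. unfold Tl, vs in Hp. rewrite combine_map in Hp.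
      apply in_app_or in Hp as [Hp|Hp]; apply in_map_iff in Hp as [x [<- Hx]]; simpl; auto.
      rewrite <- Hag by auto. apply Y1. apply in_or_app; auto. }
    destruct (HW2 vs) as [w [Hw Hv]]; auto.
    - rewrite <- Hl. apply lists_over_in. intros v Hv. unfold vs in Hv.
      apply in_map_iff in Hv as [b [<- _]]. apply d_inD.
    - apply (KT_point y'). intros p Hp. rewrite HT; auto.
    - destruct (Hv y' HT) as [b [Hb Hn']]. apply Hn'.
      destruct (HW1 w Hw) as [Hj Hc].
      assert (Hcin : In (snd w) (map snd W ++ L)) by (apply in_or_app; left; apply in_map; auto).
      rewrite <- (Y1 _ Hcin), <- (I4 _ _ Hcin Hj Hc b Hb).
      destruct (tri3 y' (al' (snd w)) b) as [K1 K2].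
      rewrite (d_sym (al' (snd w)) b) in *. 
      split; rabs_elim; lra. }
  destruct Hex as [y [Y1 Y2]].
  destruct HI as [I1 [I2 [I3 [I4 I5]]]].
  assert (Hne : forall x, In x L -> x <> m) by (intros x Hx E; subst; auto).
  exists (upd al m y). split.
  2:{ intros z Hz. apply upd_o; auto. }
  split; [|split; [|split; [|split]]].
  - intros a Ha. right; auto.
  - intros a Ha. rewrite upd_o; auto.
  - intros x z [<-|Hx] [<-|Hz].
    + rewrite !upd_m, !d_refl; auto.
    + rewrite upd_m, upd_o by auto. auto.
    + rewrite upd_m, upd_o by auto. rewrite d_sym, Y1 by auto. apply d_sym.
    + rewrite !upd_o by auto. auto.
  - intros x j [<-|Hx] Hj Hxj b Hb.
    + exfalso. apply Hno. exists j; auto.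
    + rewrite upd_o by auto. eauto.
  - intros x [<-|Hx] j c b Hj Hc Hb.
    + rewrite upd_m. apply Y2; auto.
    + rewrite upd_o by auto. destruct (I5 x Hx j c b Hj Hc Hb); auto.
Qed.

Lemma INV_init : INV A (fun x => x).
Proof.
  split; [|split; [|split; [|split]]]; auto.
  - intros x i Hx Hi [Hn _]. contradiction.
  - intros a Ha j c b Hj [_ Hc] Hb.
    simpl. rewrite (d_sym a c), Hc, <- Hts by auto.
    destruct (Hs j Hj) as [_ S2].
    destruct (S2 a b) as [K1 K2]; try (apply in_or_app; auto).
    split; rabs_elim; lra.
Qed.

Definition st (en : X -> nat) (n : nat) :=
  {p : list X * (X -> X) | INV (fst p) (snd p) /\ forall x, (en x < n)%nat -> In x (fst p)}.

Lemma step_ex (en : X -> nat) (Hen : forall x y, en x = en y -> x = y) n (p : st en n) :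
  {q : st en (S n) | forall z, In z (fst (proj1_sig p)) ->
     In z (fst (proj1_sig q)) /\ snd (proj1_sig q) z = snd (proj1_sig p) z}.
Proof.
  apply constructive_indefinite_description.
  destruct p as [[L al] [HI Hc]]; simpl in *.
  destruct (classic (exists x, en x = n)) as [[m Hm]|Hn].
  - destruct (general_step L al m HI) as [al' [HI' Hag]].
    assert (Hc' : forall x, (en x < S n)%nat -> In x (fst (m :: L, al'))).
    { intros x Hx. simpl. destruct (Nat.eq_dec (en x) n) as [E|E].
      - left. apply Hen. congruence.
      - right. apply Hc. lia. }
    exists (exist _ (m :: L, al') (conj HI' Hc')). simpl.
    intros z Hz. split; [right|]; auto.
  - assert (Hc' : forall x, (en x < S n)%nat -> In x (fst (L, al))).
    { intros x Hx. simpl. destruct (Nat.eq_dec (en x) n) as [E|E].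
      - exfalso. apply Hn. exists x; auto.
      - apply Hc. lia. }
    exists (exist _ (L, al) (conj HI Hc')). simpl. auto.
Qed.

Definition st0 (en : X -> nat) : st en 0.
Proof. exists (A, fun x => x). split. apply INV_init. intros x Hx. lia. Defined.

Fixpoint seqs (en : X -> nat) (Hen : forall x y, en x = en y -> x = y) (n : nat) : st en n :=
  match n with
  | O => st0 en
  | S k => proj1_sig (step_ex en Hen k (seqs en Hen k))
  end.

Lemma main_exists :
  exists alpha : X -> X,
    (forall x y, d (alpha x) (alpha y) = d x y) /\
    (forall x, In x A -> alpha x = x) /\
    (forall i, (i < s)%nat -> forall x, orb X d A (t i) x -> orb X d (A ++ B) (ss i) (alpha x)).
Proof.
  destruct HM as [_ [[en Hen] _]].
  set (Ls := fun n => fst (proj1_sig (seqs en Hen n))).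
  set (als := fun n => snd (proj1_sig (seqs en Hen n))).
  assert (HI : forall n, INV (Ls n) (als n)) by (intro n; apply (proj2_sig (seqs en Hen n))).
  assert (Hcov : forall n x, (en x < n)%nat -> In x (Ls n)) by (intro n; apply (proj2_sig (seqs en Hen n))).
  assert (Hstep : forall n z, In z (Ls n) -> In z (Ls (S n)) /\ als (S n) z = als n z).
  { intros n z Hz. apply (proj2_sig (step_ex en Hen n (seqs en Hen n))). auto. }
  assert (Hle : forall k k', (k <= k')%nat -> forall z, In z (Ls k) -> In z (Ls k') /\ als k' z = als k z).
  { intros k k' Hkk'. induction Hkk' as [|k' Hkk' IH]; intros z Hz; auto.
    destruct (IH z Hz) as [J1 J2]. destruct (Hstep k' z J1) as [J3 J4]. split; auto. congruence. }
  set (alpha := fun x => als (S (en x)) x).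
  assert (Hal : forall x N, (en x < N)%nat -> alpha x = als N x /\ In x (Ls N)).
  { intros x N HN. assert (Hx : In x (Ls (S (en x)))) by (apply Hcov; lia).
    destruct (Hle (S (en x)) N ltac:(lia) x Hx) as [J1 J2]. unfold alpha. auto. }
  exists alpha. split; [|split].
  - intros x y. set (N := S (en x + en y)).
    destruct (Hal x N ltac:(unfold N; lia)) as [E1 H1].
    destruct (Hal y N ltac:(unfold N; lia)) as [E2 H2].
    rewrite E1, E2. destruct (HI N) as [_ [_ [I3 _]]]. auto.
  - intros x Hx. destruct (Hal x (S (en x)) ltac:(lia)) as [E1 H1]. rewrite E1.
    destruct (HI (S (en x))) as [_ [I2 _]]. auto.
  - intros i Hi x Hx. set (N := S (en x)).
    destruct (Hal x N ltac:(unfold N; lia)) as [E1 H1].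
    destruct (HI N) as [I1 [I2 [I3 [I4 _]]]].
    destruct (Ht i Hi) as [T1 _].
    destruct Hx as [Hxn Hxd].
    assert (HA : forall a, In a A -> d (alpha x) a = t i a).
    { intros a Ha. rewrite E1. rewrite <- (I2 a Ha) at 1. rewrite I3 by auto. auto. }
    assert (HBd : forall b, In b B -> d (alpha x) b = ss i b).
    { intros b Hb. rewrite E1. apply (I4 x i); auto. split; auto. }
    split.
    + intros Hin. apply in_app_or in Hin as [Ha|Hb].
      * pose proof (HA _ Ha) as E. rewrite d_refl in E. destruct (T1 _ Ha) as [_ Hnz].
        apply Hnz; auto.
      * pose proof (HBd _ Hb) as E. rewrite d_refl in E.
        destruct (Hs i Hi) as [S1 _]. destruct (S1 (alpha x)) as [_ Hnz].
        apply in_or_app; auto. apply Hnz; auto.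
    + intros z Hz. apply in_app_or in Hz as [Ha|Hb].
      * rewrite HA, Hts by auto. auto.
      * auto.
Qed.
End Main.

Theorem theorem5p1
  (D : list R)
  (HD0 : In 0 D) (HDnn : forall r, In r D -> 0 <= r)
  (HDuniv : universal_D D)
  (X : Type) (d : X -> X -> R) (HM : in_U D X d)
  (A B : list X) (HAB : forall x, In x A -> ~ In x B)
  (s : nat) (t ss : nat -> X -> R)
  (Ht : forall i, (i < s)%nat -> katetov D X d A (t i))
  (Hs : forall i, (i < s)%nat -> katetov D X d (A ++ B) (ss i))
  (Hts : forall i, (i < s)%nat -> forall x, In x A -> ss i x = t i x)
  (Hdist : forall i j, (i < s)%nat -> (j < s)%nat -> forall r,
      orb_dist X d A (t i) A (t j) r <-> orb_dist X d (A ++ B) (ss i) (A ++ B) (ss j) r) :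
  exists alpha : X -> X,
    (forall x y, d (alpha x) (alpha y) = d x y) /\
    (forall x, In x A -> alpha x = x) /\
    (forall i, (i < s)%nat -> forall x, orb X d A (t i) x -> orb X d (A ++ B) (ss i) (alpha x)).
Proof.
  eapply main_exists; eauto.
Qed.
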